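(* For $m\ge 1$, let $\mathbf{D}_m=(d_{jk})$ be the $m\times m$ symmetric tridiagonal matrix with $d_{kk}=4k^2-6k+\tfrac52$ ($1\le k\le m$), $d_{k,k+1}=d_{k+1,k}=-k(2k-1)$ ($1\le k\le m-1$), and $d_{jk}=0$ if $|j-k|>1$. Then $\mathbf{D}_m$ is positive definite.
   Context: Equivalently, $\mathbf{D}_m=\mathbf{B}_m-\frac12\mathbf{E}_m$, where $\mathbf{E}_m$ is the $m\times m$ identity matrix and $\mathbf{B}_m$ is the symmetric tridiagonal matrix with diagonal entries $4k^2-6k+3$ and off-diagonal entries $-k(2k-1)$. *)

(* Defs.v *)
From mathcomp Require Import all_boot all_order all_algebra.
Set Implicit Arguments. Unset Strict Implicit. Unset Printing Implicit Defensive.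
Import Order.TTheory GRing.Theory Num.Theory.
Local Open Scope ring_scope.

(* The matrix D_m, indices 0-based: row/column i : 'I_m corresponds to k = i+1.
   d_kk = 4k^2 - 6k + 5/2, d_{k,k+1} = d_{k+1,k} = -k(2k-1), else 0. *)
Definition Dmat (R : fieldType) (m : nat) : 'M[R]_m :=
  \matrix_(i < m, j < m)
    let k := (i.+1)%:R : R in
    if i == j :> nat then 4 * k ^+ 2 - 6 * k + 5 / 2
    else if j == i.+1 :> nat then - (k * (2 * k - 1))
    else if i == j.+1 :> nat then
      let k' := (j.+1)%:R : R in - (k' * (2 * k' - 1))
    else 0.

Definition posdef (R : realFieldType) (m : nat) (A : 'M[R]_m) : Prop :=
  A^T = A /\ forall x : 'cV[R]_m, x != 0 -> 0 < (x^T *m A *m x) ord0 ord0.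

(* Main.v *)
Require Import Defs.
From mathcomp Require Import all_boot all_order all_algebra.
From mathcomp Require Import zify ring lra.
Import Order.TTheory GRing.Theory Num.Theory.
Local Open Scope ring_scope.

Section S.
Variable R : realFieldType.

Definition g (i j : nat) : R :=
    let k := (i.+1)%:R : R in
    if i == j :> nat then 4 * k ^+ 2 - 6 * k + 5 / 2
    else if j == i.+1 :> nat then - (k * (2 * k - 1))
    else if i == j.+1 :> nat then
      let k' := (j.+1)%:R : R in - (k' * (2 * k' - 1))
    else 0.

Definition aa (i : nat) : R := let k := (i.+1)%:R : R in 4 * k ^+ 2 - 6 * k + 5 / 2.
Definition bb (i : nat) : R := let k := (i.+1)%:R : R in - (k * (2 * k - 1)).

Lemma g_sym i j : g i j = g j i.
Proof.
rewrite /g; repeat (case: eqP => ?); try lia; subst; try lia; done.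
Qed.

Lemma g_split i j (f : nat -> R) : g i j * f j =
  (j == i)%:R * (aa i * f i) + (j == i.+1)%:R * (bb i * f i.+1)
  + (i == j.+1)%:R * (bb j * f j).
Proof.
rewrite /g /aa /bb; repeat (case: eqP => ?); try lia; subst; rewrite /= ?mul0r ?mul1r ?addr0 ?add0r //; lia.
Qed.

Lemma sum_ind m (c : nat) (h : R) : \sum_(j < m) ((j : nat) == c)%:R * h = (c < m)%:R * h.
Proof.
elim: m => [|m IH]; first by rewrite big_ord0 mul0r.
rewrite big_ord_recr /= IH.
case: (ltngtP c m) => H; rewrite ?mul0r ?addr0 ?add0r //.
  all: first [have -> : (c < m.+1)%N by lia | have -> : (c < m.+1)%N = false by lia]; by rewrite ?mul0r.
Qed.
Lemma dummy : True. Proof. by [].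
Qed.

Lemma shift m (h : nat -> R) : h 0%N = 0 -> h m = 0 ->
  \sum_(k < m) h k.+1 = \sum_(k < m) h k.
Proof.
case: m => [|m] h0 hm; first by rewrite !big_ord0.
by rewrite big_ord_recr big_ord_recl /= hm h0 addr0 add0r.
Qed.

Lemma sum_ind2 m (j : nat) (F : nat -> R) :
  \sum_(i < m) (j == (i : nat).+1)%:R * F i =
  if j is j'.+1 then (j' < m)%:R * F j' else 0.
Proof.
case: j => [|j]; first by rewrite big1 // => i _; rewrite mul0r.
rewrite -sum_ind; apply: eq_bigr => i _; rewrite eqSS.
by rewrite eq_sym; case: eqP => [->|_]; rewrite ?mul0r.
Qed.

Lemma inner m (f : nat -> R) j : (j < m)%N -> (forall n, (m <= n)%N -> f n = 0) ->
  \sum_(i < m) f i * g i j = aa j * f j + bb j * f j.+1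
     + (if j is j'.+1 then bb j' * f j' else 0).
Proof.
move=> jm fm.
under eq_bigr => i _ do rewrite mulrC g_sym g_split.
rewrite !big_split /= !sum_ind (sum_ind2 _ _ (fun i => bb i * f i)) jm mul1r.
congr (_ + _ + _).
  case: (ltnP j.+1 m) => H; first by rewrite mul1r.
  by rewrite fm // !mulr0.
case: j jm => [|j] jm //.
have -> : (j < m)%N by lia. by rewrite mul1r.
Qed.

Lemma ptwise (k : nat) (f : nat -> R) :
  1 / 2 * ((2 * k%:R + 1) * f k - (2 * k%:R + 2) * f k.+1) ^+ 2 =
  (aa k * f k ^+ 2 + 2 * bb k * f k * f k.+1) +
  (2 * (k.+1)%:R ^+ 2 * f k.+1 ^+ 2 - 2 * k%:R ^+ 2 * f k ^+ 2).
Proof.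
rewrite /aa /bb. field. by [].
Qed.

Lemma quad m (f : nat -> R) : (forall n, (m <= n)%N -> f n = 0) ->
  \sum_(j < m) (\sum_(i < m) f i * g i j) * f j =
  1 / 2 * \sum_(k < m) ((2 * k%:R + 1) * f k - (2 * k%:R + 2) * f k.+1) ^+ 2.
Proof.
move=> fm.
transitivity (\sum_(k < m) (aa k * f k ^+ 2 + 2 * bb k * f k * f k.+1)).
  under eq_bigr => j _ do rewrite (@inner m f j (ltn_ord j) fm) mulrDl.
  rewrite big_split /=.
  rewrite -(@shift m (fun j => (if j is j'.+1 then bb j' * f j' else 0) * f j)) //=;
    last by rewrite fm // mulr0.
  rewrite -big_split /=; apply: eq_bigr => k _; rewrite expr2; ring.
  by rewrite mul0r.
rewrite mulr_sumr.
symmetry; under eq_bigr => k _ do rewrite ptwise.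
rewrite big_split /= sumrB.
rewrite (@shift m (fun k => 2 * k%:R ^+ 2 * f k ^+ 2)) ?subrr ?addr0 //.
  by rewrite !expr2 !(mul0r, mulr0).
by rewrite fm // !expr2 !(mul0r, mulr0).
Qed.

End S.

Theorem proposition4p1 (R : realFieldType) (m : nat) (hm : (1 <= m)%N) :
  posdef (Dmat R m).
Proof.
case: m hm => [//|m] _.
have E : forall i j : 'I_m.+1, Dmat R m.+1 i j = g R i j by move=> i j; rewrite mxE.
split.
  by apply/matrixP => i j; rewrite !mxE; exact: g_sym.
move=> x xn0.
pose f n := if (n < m.+1)%N then x (inord n) ord0 else 0.
have fx : forall i : 'I_m.+1, x i ord0 = f i by move=> i; rewrite /f ltn_ord inord_val.
have fm : forall n, (m.+1 <= n)%N -> f n = 0 by move=> n h; rewrite /f ltnNge h.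
have -> : (x^T *m Dmat R m.+1 *m x) ord0 ord0 =
    \sum_(j < m.+1) (\sum_(i < m.+1) f i * g R i j) * f j.
  rewrite mxE; apply: eq_bigr => j _; rewrite mxE fx; congr (_ * _).
  by apply: eq_bigr => i _; rewrite E mxE fx.
rewrite quad //.
apply: mulr_gt0; first lra.
rewrite lt_def sumr_ge0 ?andbT; last by move=> k _; exact: sqr_ge0.
apply: contra xn0 => /eqP S0.
have H := psumr_eq0P (fun k _ => sqr_ge0 _) S0.
have key : forall d, f (m.+1 - d)%N = 0.
  elim=> [|d IH]; first by rewrite fm.
  case: (ltnP d m.+1) => hd; last first.
    by have -> : (m.+1 - d.+1 = m.+1 - d)%N by lia.
  have Hk := H (@Ordinal m.+1 (m - d) (leq_subr d m)) isT.
  move: Hk => /= /eqP; rewrite sqrf_eq0 subr_eq0 => /eqP.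
  have -> : ((m - d).+1 = m.+1 - d)%N by lia.
  rewrite IH mulr0 subSS => /eqP; rewrite mulf_eq0 => /orP [|/eqP //].
  by rewrite gt_eqF // ltr_pwDr // mulr_ge0.
apply/eqP/matrixP => i j; rewrite ord1 !mxE fx.
by have := key (m.+1 - i)%N; rewrite subKn // ltnW.
Qed.
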